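(* Let $D$ be an arc-colored digraph of order $n\geq 4$ containing no rainbow triangle, and let $v\in V(D)$ be such that $D-v\cong\overleftrightarrow{K}_{n-1}$ and $d^{s}(v)\geq 3$. Then $CN^{-}(v)\cap C^{s}(v)=\emptyset$ or $CN^{+}(v)\cap C^{s}(v)=\emptyset$. Moreover, if in addition $D\cong\overleftrightarrow{K}_4$, then $c(D)\leq 5$.
   Context: All digraphs are finite, without loops or multiple arcs (opposite arcs allowed); $\overleftrightarrow{K}_{m}$ is the complete digraph on $m$ vertices. An arc-coloring is any map $C:A(D)\to\mathbb{N}$; $c(D)$ is the number of colors used. A rainbow triangle is a directed 3-cycle with pairwise distinct arc colors. $CN^{-}(v)$ (resp. $CN^{+}(v)$) is the set of colors on the arcs entering (resp. leaving) $v$. A color $c\in C(D)$ is saturated by $v$ if every arc of color $c$ is incident to $v$; $C^{s}(v)$ is the set of colors saturated by $v$ and $d^{s}(v)=|C^{s}(v)|$. *)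

(* Defs.v *)
From mathcomp Require Import all_boot.
Set Implicit Arguments. Unset Strict Implicit. Unset Printing Implicit Defensive.

(* A digraph is a finite vertex type V with an arc relation A : rel V
   (required irreflexive = no loops; a relation gives no multiple arcs,
   opposite arcs allowed).  An arc-colouring is C : V -> V -> nat, only
   its values on arcs matter. *)

Section Defs.
Variables (V : finType) (A : rel V) (C : V -> V -> nat).

Definition arcs : seq (V * V) := [seq p <- enum [set: V * V] | A p.1 p.2].

Definition colors : seq nat := undup [seq C p.1 p.2 | p <- arcs].

Definition num_colors : nat := size colors.

Definition rainbow_triangle (u v w : V) : bool :=
  [&& A u v, A v w, A w u,
      C u v != C v w, C v w != C w u & C w u != C u v].

Definition no_rainbow_triangle : Prop :=
  forall u v w : V, ~~ rainbow_triangle u v w.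

Definition CNin (v : V) : seq nat := [seq C x v | x <- enum V & A x v].
Definition CNout (v : V) : seq nat := [seq C v x | x <- enum V & A v x].

Definition saturated (v : V) (c : nat) : bool :=
  (c \in colors) &&
  all (fun p : V * V => (p.1 == v) || (p.2 == v))
      [seq p <- arcs | C p.1 p.2 == c].

Definition Cs (v : V) : seq nat := [seq c <- colors | saturated v c].
Definition ds (v : V) : nat := size (Cs v).

Definition complete_minus (v : V) : Prop :=
  forall x y : V, x != v -> y != v -> x != y -> A x y.

Definition complete_digraph : Prop :=
  forall x y : V, x != y -> A x y.

End Defs.

(* Main.v *)
Require Import Defs.
From mathcomp Require Import all_boot.
Set Implicit Arguments. Unset Strict Implicit. Unset Printing Implicit Defensive.

Lemma nort (V : finType) (A : rel V) (C : V -> V -> nat) u v w :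
  no_rainbow_triangle A C -> A u v -> A v w -> A w u ->
  C u v = C v w \/ C v w = C w u \/ C w u = C u v.
Proof.
move=> H huv hvw hwu; move: (H u v w); rewrite /rainbow_triangle huv hvw hwu /=.
case: eqP => [->|_]; first by left.
case: eqP => [->|_]; first by right; left.
case: eqP => [->|_]; first by right; right.
by [].
Qed.

Lemma Cs_uniq (V : finType) (A : rel V) (C : V -> V -> nat) v : uniq (Cs A C v).
Proof. by rewrite /Cs filter_uniq // undup_uniq. Qed.

Lemma sat_inv (V : finType) (A : rel V) (C : V -> V -> nat) v c :
  c \in Cs A C v ->
  exists p, (A v p /\ C v p = c) \/ (A p v /\ C p v = c).
Proof.
rewrite /Cs mem_filter => /andP [/andP [hc /allP hall] _].
move: hc; rewrite /colors mem_undup => /mapP [[p1 p2] hp ec]; subst c.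
have hp' : (p1, p2) \in [seq p <- arcs A | C p.1 p.2 == C p1 p2].
  by rewrite mem_filter /= eqxx.
move: (hall _ hp') => /= /orP [/eqP e|/eqP e]; subst.
- exists p2; left; split => //; move: hp; rewrite /arcs mem_filter => /andP [] //.
- exists p1; right; split => //; move: hp; rewrite /arcs mem_filter => /andP [] //.
Qed.

Lemma sat_inner (V : finType) (A : rel V) (C : V -> V -> nat) v p q :
  A p q -> p != v -> q != v -> C p q \notin Cs A C v.
Proof.
move=> hpq hp hq; apply/negP; rewrite /Cs mem_filter => /andP [/andP [_ /allP hall] _].
have : (p, q) \in [seq w <- arcs A | C w.1 w.2 == C p q].
  by rewrite mem_filter /= eqxx /arcs mem_filter /= hpq mem_enum inE.
by move/hall => /=; rewrite (negbTE hp) (negbTE hq).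
Qed.

Lemma pick3 (s : seq nat) a b : uniq s -> 3 <= size s ->
  exists r, [/\ r \in s, r != a & r != b].
Proof.
move=> us ss; case h: (has (fun r => (r != a) && (r != b)) s).
  by case/hasP: h => r hr /andP [h1 h2]; exists r.
move/hasPn: h => h.
have : size s <= size [:: a; b].
  apply: uniq_leq_size => // r hr; move: (h r hr).
  by rewrite !inE negb_and !negbK orbC.
by move=> /= h2; move: (leq_trans ss h2).
Qed.

Lemma CNin_mem (V : finType) (A : rel V) (C : V -> V -> nat) v x :
  A x v -> C x v \in CNin A C v.
Proof. by move=> h; apply/mapP; exists x => //; rewrite mem_filter h mem_enum. Qed.

Lemma CNout_mem (V : finType) (A : rel V) (C : V -> V -> nat) v x :
  A v x -> C v x \in CNout A C v.
Proof. by move=> h; apply/mapP; exists x => //; rewrite mem_filter h mem_enum. Qed.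

Lemma CNin_inv (V : finType) (A : rel V) (C : V -> V -> nat) v c :
  c \in CNin A C v -> exists x, A x v /\ C x v = c.
Proof. by case/mapP => x; rewrite mem_filter => /andP [h _] ->; exists x. Qed.

Lemma CNout_inv (V : finType) (A : rel V) (C : V -> V -> nat) v c :
  c \in CNout A C v -> exists x, A v x /\ C v x = c.
Proof. by case/mapP => x; rewrite mem_filter => /andP [h _] ->; exists x. Qed.

Lemma coreL (V : finType) (A : rel V) (C : V -> V -> nat) v x y r :
  irreflexive A -> no_rainbow_triangle A C -> complete_minus A v ->
  A x v -> A v y -> C x v \in Cs A C v -> C v y \in Cs A C v ->
  C x v != C v y -> r \in Cs A C v -> r != C x v -> r != C v y -> False.
Proof.
move=> irr nr cm hxv hvy sa sb ab hr ra rb.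
have xv : x != v by apply/eqP => e; subst; rewrite irr in hxv.
have yv : y != v by apply/eqP => e; subst; rewrite irr in hvy.
have exy : x = y.
  case: (eqVneq x y) => // nxy.
  have hyx : A y x by apply: cm => //; rewrite eq_sym.
  have nin := @sat_inner _ A C v _ _ hyx yv xv.
  case: (nort nr hxv hvy hyx) => [e|[e|e]].
  - by rewrite e eqxx in ab.
  - by rewrite -e sb in nin.
  - by rewrite e sa in nin.
subst y.
case: (sat_inv hr) => z [[hvz ez]|[hzv ez]].
- have zv : z != v by apply/eqP => e; subst; rewrite irr in hvz.
  have zx : z != x by apply/eqP => e; subst; rewrite eqxx in rb.
  have hzx := cm z x zv xv zx.
  have nin := @sat_inner _ A C v _ _ hzx zv xv.
  case: (nort nr hxv hvz hzx) => [e|[e|e]].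
  - by rewrite e ez eqxx in ra.
  - by rewrite -e ez hr in nin.
  - by rewrite e sa in nin.
- have zv : z != v by apply/eqP => e; subst; rewrite irr in hzv.
  have zx : z != x by apply/eqP => e; subst; rewrite eqxx in ra.
  have hxz : A x z by apply: cm => //; rewrite eq_sym.
  have nin := @sat_inner _ A C v _ _ hxz xv zv.
  case: (nort nr hzv hvy hxz) => [e|[e|e]].
  - by rewrite -e ez eqxx in rb.
  - by rewrite -e sb in nin.
  - by rewrite e ez hr in nin.
Qed.

Lemma part1 (V : finType) (A : rel V) (C : V -> V -> nat) (v : V) :
  irreflexive A -> no_rainbow_triangle A C -> complete_minus A v ->
  3 <= ds A C v ->
  ((~~ has (fun c => c \in Cs A C v) (CNin A C v)) \/
   (~~ has (fun c => c \in Cs A C v) (CNout A C v))).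
Proof.
move=> irr nr cm hds.
case hi: (has _ (CNin A C v)); last by left.
case ho: (has _ (CNout A C v)); last by right.
exfalso.
case/hasP: hi => a /CNin_inv [x [hxv <-]] sa.
case/hasP: ho => b /CNout_inv [y [hvy <-]] sb.
have us := Cs_uniq A C v.
case: (eqVneq (C x v) (C v y)) => ab; last first.
  have [r [hr ra rb]] := pick3 (C x v) (C v y) us hds.
  exact: (coreL irr nr cm hxv hvy sa sb ab hr ra rb).
have [c [hc ca _]] := pick3 (C x v) (C x v) us hds.
have [d [hd da dc]] := pick3 (C x v) c us hds.
case: (sat_inv hc) => z [[hvz ez]|[hzv ez]].
- apply: (coreL irr nr cm hxv hvz sa _ _ hd da) => //.
  + by rewrite ez.
  + by rewrite ez eq_sym.
  + by rewrite ez.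
- apply: (coreL irr nr cm hzv hvy _ sb _ hd) => //.
  + by rewrite ez.
  + by rewrite ez -ab.
  + by rewrite ez.
  + by rewrite -ab.
Qed.

Lemma three (V : finType) (v : V) : #|V| = 4 ->
  exists x y z : V, ([/\ x != v, y != v & z != v] /\ [/\ x != y, y != z & z != x]) /\
    forall w, w != v -> w \in [:: x; y; z].
Proof.
move=> h4.
have hs : size (enum (predC1 v)) = 3 by rewrite -cardE cardC1 h4.
have hu := enum_uniq (predC1 v).
have hm : forall w, (w \in enum (predC1 v)) = (w != v) by move=> w; rewrite mem_enum.
move: hs hu hm; case: (enum (predC1 v)) => [|x [|y [|z [|? ?]]]] //= _.
rewrite !inE !negb_or => /andP [/andP [xy xz] /andP [yz _]] hm.
exists x, y, z; split.
  by split; split; rewrite -?hm ?inE ?eqxx ?orbT // eq_sym.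
by move=> w; rewrite -hm !inE.
Qed.

Lemma all3 (s : seq nat) a b c : uniq s -> 3 <= size s ->
  {subset s <= [:: a; b; c]} -> [/\ a \in s, b \in s & c \in s].
Proof.
move=> us ss sub.
have k : forall a' b' c', {subset s <= [:: a'; b'; c']} -> a' \in s.
  move=> a' b' c' sub'; apply/negPn/negP => na.
  have : size s <= size [:: b'; c'].
    apply: uniq_leq_size => // r hr; move: (sub' r hr); rewrite !inE.
    by case/orP => // /eqP e; subst; rewrite hr in na.
  by move=> /= h2; move: (leq_trans ss h2).
split.
- exact: (k a b c).
- apply: (k b a c) => r /sub; rewrite !inE; by case: (r == a); case: (r == b).
- apply: (k c a b) => r /sub; rewrite !inE; by case: (r == a); case: (r == b); case: (r == c).
Qed.

Lemma size5 (s : seq nat) a b c d e f : uniq s ->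
  {subset s <= [:: a; b; c; d; e; f]} -> d = e \/ e = f \/ f = d -> size s <= 5.
Proof.
move=> us sub [h|[h|h]].
- apply: (@uniq_leq_size _ _ [:: a; b; c; e; f]) => // r /sub; rewrite !inE h.
  by do ![case: eqP => //=].
- apply: (@uniq_leq_size _ _ [:: a; b; c; d; f]) => // r /sub; rewrite !inE h.
  by do ![case: eqP => //=].
- apply: (@uniq_leq_size _ _ [:: a; b; c; d; e]) => // r /sub; rewrite !inE h.
  by do ![case: eqP => //=].
Qed.

Lemma memf3 (V : finType) (f : V -> nat) w x y z :
  w \in [:: x; y; z] -> f w \in [:: f x; f y; f z].
Proof. by move=> h; apply: (map_f f h). Qed.

Lemma colors_inv (V : finType) (A : rel V) (C : V -> V -> nat) c :
  c \in colors A C -> exists p q, A p q /\ c = C p q.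
Proof.
rewrite /colors mem_undup => /mapP [[p q] hp ->]; exists p, q; split => //.
by move: hp; rewrite /arcs mem_filter => /andP [].
Qed.

Lemma part2 (V : finType) (A : rel V) (C : V -> V -> nat) (v : V) :
  irreflexive A -> no_rainbow_triangle A C -> complete_minus A v ->
  3 <= ds A C v -> complete_digraph A -> #|V| = 4 -> num_colors A C <= 5.
Proof.
move=> irr nr cm hds cd h4.
have [x [y [z [[[xv yv zv] [xy yz zx]] hall]]]] := three v h4.
have us := Cs_uniq A C v.
have neq : forall p q, A p q -> p != q.
  by move=> p q hpq; apply/eqP => e; subst; rewrite irr in hpq.
have cu : uniq (colors A C) by rewrite /colors undup_uniq.
have ne : forall a b : V, a != b -> b != a by move=> a b; rewrite eq_sym.
case: (part1 irr nr cm hds) => /hasPn hfree.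
- have nin : forall p, p != v -> C p v \notin Cs A C v.
    by move=> p pv; apply: hfree; apply: CNin_mem; apply: cd.
  have sub : {subset Cs A C v <= [:: C v x; C v y; C v z]}.
    move=> r hr; case: (sat_inv hr) => w [[hvw <-]|[hwv ew]].
    + apply: memf3; apply: hall; rewrite eq_sym; exact: neq.
    + by move: (nin w (neq _ _ hwv)); rewrite ew hr.
  have [sx sy sz] := all3 us hds sub.
  have sat : forall p, p != v -> C v p \in Cs A C v.
    by move=> p /hall; rewrite !inE => /or3P [] /eqP ->.
  have F : forall p q, p != v -> q != v -> p != q -> C p q = C q v.
    move=> p q pv qv pq; have hpq := cm p q pv qv pq.
    have hvp := cd v p (ne _ _ pv); have hqv := cd q v qv.
    have n1 := @sat_inner _ A C v _ _ hpq pv qv.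
    case: (nort nr hvp hpq hqv) => [e|[e|e]] //.
    + by move: n1; rewrite -e sat.
    + by move: (nin q qv); rewrite e sat.
  apply: (@size5 _ (C v x) (C v y) (C v z) (C x v) (C y v) (C z v) cu).
  + move=> c /colors_inv [p [q [hpq ->]]].
    case: (eqVneq p v) hpq => [->|pv] hpq.
      have := memf3 (C v) (hall q (ne _ _ (neq _ _ hpq))).
      by rewrite !inE /= => /or3P [] ->; rewrite ?orbT.
    case: (eqVneq q v) hpq => [->|qv] hpq.
      have := memf3 (fun w => C w v) (hall p pv).
      by rewrite !inE /= => /or3P [] ->; rewrite ?orbT.
    rewrite F //; last exact: neq.
    have := memf3 (fun w => C w v) (hall q qv).
    by rewrite !inE /= => /or3P [] ->; rewrite ?orbT.
  + have := nort nr (cd x y xy) (cd y z yz) (cd z x zx).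
    rewrite (F x y) // (F y z) // (F z x) //.
    by case=> [->|[->|->]]; auto.
- have nout : forall p, p != v -> C v p \notin Cs A C v.
    by move=> p pv; apply: hfree; apply: CNout_mem; apply: cd; rewrite eq_sym.
  have sub : {subset Cs A C v <= [:: C x v; C y v; C z v]}.
    move=> r hr; case: (sat_inv hr) => w [[hvw ew]|[hwv <-]].
    + by move: (nout w (ne _ _ (neq _ _ hvw))); rewrite ew hr.
    + apply: (memf3 (fun w => C w v)); apply: hall; exact: neq.
  have [sx sy sz] := all3 us hds sub.
  have sat : forall p, p != v -> C p v \in Cs A C v.
    by move=> p /hall; rewrite !inE => /or3P [] /eqP ->.
  have F : forall p q, p != v -> q != v -> p != q -> C q p = C v q.
    move=> p q pv qv pq; have hqp := cm q p qv pv (ne _ _ pq).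
    have hpv := cd p v pv; have hvq := cd v q (ne _ _ qv).
    have n1 := @sat_inner _ A C v _ _ hqp qv pv.
    case: (nort nr hpv hvq hqp) => [e|[e|e]] //.
    + by move: (nout q qv); rewrite -e sat.
    + by move: n1; rewrite e sat.
  apply: (@size5 _ (C x v) (C y v) (C z v) (C v x) (C v y) (C v z) cu).
  + move=> c /colors_inv [p [q [hpq ->]]].
    case: (eqVneq p v) hpq => [->|pv] hpq.
      have := memf3 (C v) (hall q (ne _ _ (neq _ _ hpq))).
      by rewrite !inE /= => /or3P [] ->; rewrite ?orbT.
    case: (eqVneq q v) hpq => [->|qv] hpq.
      have := memf3 (fun w => C w v) (hall p pv).
      by rewrite !inE /= => /or3P [] ->; rewrite ?orbT.
    rewrite (F q p) //; last by rewrite eq_sym; exact: neq.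
    have := memf3 (C v) (hall p pv).
    by rewrite !inE /= => /or3P [] ->; rewrite ?orbT.
  + have := nort nr (cd x y xy) (cd y z yz) (cd z x zx).
    rewrite (F y x) ?(ne _ _ xy) // (F z y) ?(ne _ _ yz) // (F x z) ?(ne _ _ zx) //.
Qed.

Theorem lemma1 (V : finType) (A : rel V) (C : V -> V -> nat) (v : V) :
  irreflexive A ->
  4 <= #|V| ->
  no_rainbow_triangle A C ->
  complete_minus A v ->
  3 <= ds A C v ->
  ((~~ has (fun c => c \in Cs A C v) (CNin A C v)) \/
   (~~ has (fun c => c \in Cs A C v) (CNout A C v))) /\
  (complete_digraph A -> #|V| = 4 -> num_colors A C <= 5).
Proof.
move=> irr _ nr cm hds; split; first exact: part1.
by move=> cd h4; exact: (part2 irr nr cm hds cd h4).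
Qed.
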